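(* Let $H=(V,E)$ be a hypergraph whose vertex set $V$ is a partition of $[n]$ into sets of cardinality at least $2$. Choose $\bar i_I\in I$ for each $I\in V$ and let $R=\{\bar i_I\}_{I\in V}$, and let $\mathcal{J}^H|_R=\{J\in\mathcal{J}^H: J\subseteq R\}$. Then the map $J\mapsto E(J)$ is a bijection from $\mathcal{J}^H|_R$ onto $L(V)\cup E$, and the linear map $w\mapsto z$ defined by $z_{E(J)}=w_J$ for all $J\in\mathcal{J}^H|_R$ is a one-to-one correspondence between $\operatorname{proj}_{\mathcal{J}^H|_R}\mathrm{MC}^H$ and $\mathrm{MP}^H$.
   Context: Let $n$ be a positive integer, $[n]=\{1,\dots,n\}$. A hypergraph $H=(V,E)$ here has as vertex set $V$ a family of pairwise disjoint subsets of $[n]$, each of cardinality at least $2$, and hyperedge set $E$ consisting of subsets $e\subseteq V$ with $|e|\ge 2$. Write $L(V)=\{\{I\}: I\in V\}$. For a nonempty $e\subseteq V$, $\mathcal{J}^e$ denotes the family of sets $J\subseteq \bigcup_{I\in e} I$ with $|J\cap I|=1$ for every $I\in e$. Let $\mathcal{J}^H=\bigcup_{e\in L(V)\cup E}\mathcal{J}^e$. For $J$ with $|J\cap I|\le 1$ for all $I\in V$, $E(J)=\{I\in V: |J\cap I|=1\}$. For $w\in\mathbb{R}^{\mathcal{J}^H}$ write $w_i=w_{\{i\}}$ and $w(A)=\sum_{i\in A}w_i$. Let $\mathscr{S}^H=\{w\in\{0,1\}^{\mathcal{J}^H}: w(I)=1\ \forall I\in V;\ w_J=\prod_{i\in J}w_i\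 \forall J\in\mathcal{J}^H, |J|>1\}$ and $\mathrm{MC}^H=\operatorname{conv}\mathscr{S}^H$. The multilinear set is $\mathcal{S}^H=\{z\in\{0,1\}^{L(V)\cup E}: z_e=\prod_{I\in e}z_I\ \forall e\in E\}$, with $z_I=z_{\{I\}}$, and $\mathrm{MP}^H=\operatorname{conv}\mathcal{S}^H$. For a finite index set $S'\subseteq S$, $\operatorname{proj}_{S'}$ extracts the coordinates indexed by $S'$ (applied elementwise to sets). *)

(* Defs.v *)
(* Ground set [n] is modelled by 'I_n (relabeling 1..n -> 0..n-1). *)
From mathcomp Require Import all_boot all_order all_algebra.
Set Implicit Arguments. Unset Strict Implicit. Unset Printing Implicit Defensive.
Import Order.TTheory GRing.Theory Num.Theory.
Local Open Scope ring_scope.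

Section Hyper.
Variable n : nat.
Variable R : realFieldType.

Definition LV (V : {set {set 'I_n}}) : {set {set {set 'I_n}}} :=
  [set [set I] | I in V].

Definition Jfam (e : {set {set 'I_n}}) : {set {set 'I_n}} :=
  [set J : {set 'I_n} | (J \subset \bigcup_(I in e) I)
                        && [forall I in e, #|J :&: I| == 1%N]].

Definition JH (V : {set {set 'I_n}}) (E : {set {set {set 'I_n}}}) :
  {set {set 'I_n}} := \bigcup_(e in LV V :|: E) Jfam e.

Definition EJ (V : {set {set 'I_n}}) (J : {set 'I_n}) : {set {set 'I_n}} :=
  [set I in V | #|J :&: I| == 1%N].

(* Vectors in R^S (S a finite index subset of a finite type T) are modelled as
   functions T -> R vanishing outside S. *)

Definition inSH (V : {set {set 'I_n}}) (E : {set {set {set 'I_n}}})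
  (w : {set 'I_n} -> R) : Prop :=
  [/\ (forall J, J \notin JH V E -> w J = 0),
      (forall J, J \in JH V E -> w J = 0 \/ w J = 1),
      (forall I, I \in V -> \sum_(i in I) w [set i] = 1)
    & (forall J, J \in JH V E -> (1 < #|J|)%N -> w J = \prod_(i in J) w [set i])].

(* the multilinear set S^H (z_I := z_{{I}}) *)
Definition inMS (V : {set {set 'I_n}}) (E : {set {set {set 'I_n}}})
  (z : {set {set 'I_n}} -> R) : Prop :=
  [/\ (forall e, e \notin LV V :|: E -> z e = 0),
      (forall e, e \in LV V :|: E -> z e = 0 \/ z e = 1)
    & (forall e, e \in E -> z e = \prod_(I in e) z [set I])].

End Hyper.

Definition conv (R : realFieldType) (T : Type) (S : (T -> R) -> Prop) :
  (T -> R) -> Prop :=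
  fun x => exists (m : nat) (p : 'I_m -> T -> R) (l : 'I_m -> R),
    [/\ (forall k, S (p k)), (forall k, 0 <= l k), \sum_k l k = 1
      & (forall t, x t = \sum_k l k * p k t)].

Definition MC (R : realFieldType) {n : nat} V E : ({set 'I_n} -> R) -> Prop :=
  conv (@inSH n R V E).
Definition MP (R : realFieldType) {n : nat} V E : ({set {set 'I_n}} -> R) -> Prop :=
  conv (@inMS n R V E).

Definition JHR (n : nat) (V : {set {set 'I_n}}) (E : {set {set {set 'I_n}}})
  (ibar : {set 'I_n} -> 'I_n) : {set {set 'I_n}} :=
  [set J in JH V E | J \subset [set ibar I | I in V]].

Definition proj (R : realFieldType) (T : finType) (S' : {set T}) (w : T -> R) :
  T -> R := fun J => if J \in S' then w J else 0.

(* the linear map w |-> z with z_{E(J)} = w_J for J in S' (J |-> E(J) being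
   injective on S', the sum has at most one term) *)
Definition phi (R : realFieldType) (n : nat) (V : {set {set 'I_n}})
  (S' : {set {set 'I_n}}) (w : {set 'I_n} -> R) : {set {set 'I_n}} -> R :=
  fun e => \sum_(J in S' | EJ V J == e) w J.

Arguments MC R {n} V E _.
Arguments MP R {n} V E _.

(* Main.v *)
From Stdlib Require Import FunctionalExtensionality.
Require Import Defs.
From mathcomp Require Import all_boot all_order all_algebra.
Import Order.TTheory GRing.Theory Num.Theory.
Local Open Scope ring_scope.

Section P.
Variables (R : realFieldType) (n : nat) (V : {set {set 'I_n}})
  (E : {set {set {set 'I_n}}}) (ibar : {set 'I_n} -> 'I_n).
Hypothesis Htriv : trivIset V.
Hypothesis Hcov : cover V = [set: 'I_n].
Hypothesis H2 : forall {I}, I \in V -> (2 <= #|I|)%N.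
Hypothesis HE : forall {e}, e \in E -> e \subset V.
Hypothesis HE2 : forall {e}, e \in E -> (2 <= #|e|)%N.
Hypothesis Hib : forall {I}, I \in V -> ibar I \in I.

Local Notation SR := (JHR V E ibar).
Definition Je (e : {set {set 'I_n}}) := [set ibar I | I in e].

Lemma blk_eq {I1 I2 x} : I1 \in V -> I2 \in V -> x \in I1 -> x \in I2 -> I1 = I2.
Proof.
move=> h1 h2 x1 x2; apply/eqP; apply/negPn/negP => ne.
have := trivIsetP Htriv _ _ h1 h2 ne.
by move/disjointFr => /(_ x x1); rewrite x2.
Qed.

Lemma ibar_inj : {in V &, injective ibar}.
Proof.
move=> I1 I2 h1 h2 e; apply: (blk_eq h1 h2 (Hib h1)); rewrite e; exact: Hib.
Qed.

Lemma LVE_sub {e : {set {set 'I_n}}} : e \in LV V :|: E -> e \subset V.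
Proof. case/setUP => [/imsetP [I hI ->]|/HE //]. by rewrite sub1set. Qed.

Lemma Je_cap (e : {set {set 'I_n}}) I : e \subset V -> I \in V ->
  Je e :&: I = if I \in e then [set ibar I] else set0.
Proof.
move=> se hI; apply/setP => x; rewrite !inE.
case: ifP => hIe; rewrite ?inE.
  apply/andP/eqP.
    move=> [/imsetP [I' hI' ->] hx].
    by rewrite (blk_eq (subsetP se _ hI') hI (Hib (subsetP se _ hI')) hx).
  move=> ->; split; [by apply/imsetP; exists I | exact: Hib].
apply/andP => [[/imsetP [I' hI' ex] hx]].
rewrite ex in hx.
have eI := blk_eq (subsetP se _ hI') hI (Hib (subsetP se _ hI')) hx.
by rewrite -eI hI' in hIe.
Qed.

Lemma card_Je_cap (e : {set {set 'I_n}}) I : e \subset V -> I \in V -> #|Je e :&: I| = (I \in e).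
Proof. move=> se hI; by rewrite Je_cap //; case: ifP; rewrite ?cards1 ?cards0. Qed.

Lemma EJ_Je (e : {set {set 'I_n}}) : e \subset V -> EJ V (Je e) = e.
Proof.
move=> se; apply/setP => I; rewrite /EJ inE.
case hI: (I \in V) => /=.
  by rewrite card_Je_cap //; case: (I \in e).
apply/esym/negbTE; apply/negP => /(subsetP se); by rewrite hI.
Qed.

Lemma Je_JHR {e : {set {set 'I_n}}} : e \in LV V :|: E -> Je e \in SR.
Proof.
move=> he; have se := LVE_sub he.
rewrite /JHR inE; apply/andP; split.
  apply/bigcupP; exists e => //; rewrite /Jfam inE; apply/andP; split.
    apply/subsetP => x /imsetP [I hI ->]; apply/bigcupP; exists I => //.
    apply: Hib; exact: (subsetP se).
  apply/forall_inP => I hI; rewrite card_Je_cap ?hI //; exact: subsetP se _ hI.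
exact: imsetS.
Qed.

Lemma JHR_Je {J : {set 'I_n}} : J \in SR -> exists2 e, e \in LV V :|: E & J = Je e.
Proof.
rewrite inE => /andP [/bigcupP [e he]]; rewrite inE => /andP [sJ /forall_inP hc] sR.
exists e => //; have se := LVE_sub he.
apply/setP => x; apply/idP/idP.
  move=> xJ; have := subsetP sR _ xJ => /imsetP [I' hI' ex].
  have := subsetP sJ _ xJ => /bigcupP [I hI xI].
  rewrite ex in xI.
  have eqI := blk_eq hI' (subsetP se _ hI) (Hib hI') xI.
  by rewrite ex; apply/imsetP; exists I' => //; rewrite eqI.
case/imsetP => I hI ->.
have := hc I hI; move/cards1P => [y hy].
have : y \in J :&: I by rewrite hy set11.
rewrite inE => /andP [yJ yI].
have := subsetP sR _ yJ => /imsetP [I' hI' ey].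
rewrite ey in yJ yI.
have eqI := blk_eq hI' (subsetP se _ hI) (Hib hI') yI.
by rewrite -eqI.
Qed.

Lemma EJ_JHR (J : {set 'I_n}) : J \in SR -> EJ V J \in LV V :|: E.
Proof. by case/JHR_Je => e he ->; rewrite EJ_Je // LVE_sub. Qed.

Lemma phiE (w : {set 'I_n} -> R) e :
  phi V SR (proj SR w) e = if e \in LV V :|: E then w (Je e) else 0.
Proof.
rewrite /phi; case: ifP => he.
  rewrite (big_pred1 (Je e)); first by rewrite /proj Je_JHR.
  move=> J /=; apply/andP/eqP.
    move=> [hJ /eqP <-]; case: (JHR_Je hJ) => e' he' ->.
    by rewrite EJ_Je // LVE_sub.
  move=> ->; split; [exact: Je_JHR | by rewrite EJ_Je // LVE_sub].
rewrite big1 // => J /andP [hJ /eqP hE].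
by move: he; rewrite -hE EJ_JHR.
Qed.

Lemma phi_lin m (p : 'I_m -> {set 'I_n} -> R) l w :
  (forall t, w t = \sum_k l k * p k t) ->
  forall e, phi V SR (proj SR w) e = \sum_k l k * phi V SR (proj SR (p k)) e.
Proof.
move=> hw e; rewrite phiE; under eq_bigr => k _ do rewrite phiE.
case: ifP => _; first by rewrite hw.
by rewrite big1 // => k _; rewrite mulr0.
Qed.

Lemma card_Je (e : {set {set 'I_n}}) : e \subset V -> #|Je e| = #|e|.
Proof.
move=> se; apply: card_in_imset => x y hx hy.
by apply: ibar_inj => //; apply: (subsetP se).
Qed.

Lemma prod_Je (F : 'I_n -> R) (e : {set {set 'I_n}}) : e \subset V ->
  \prod_(i in Je e) F i = \prod_(I in e) F (ibar I).
Proof.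
move=> se; apply: big_imset => x y hx hy.
by apply: ibar_inj => //; apply: (subsetP se).
Qed.

Lemma inMS_phi (p : {set 'I_n} -> R) : inSH V E p -> inMS V E (phi V SR (proj SR p)).
Proof.
case=> p0 p01 p1 pm; split.
- by move=> e he; rewrite phiE (negbTE he).
- move=> e he; rewrite phiE he; apply: p01.
  by have := Je_JHR he; rewrite inE => /andP [].
- move=> e he.
  have heU : e \in LV V :|: E by rewrite inE he orbT.
  rewrite phiE heU; have se := HE he.
  rewrite pm; last first.
    by rewrite card_Je //; exact: HE2.
    by have := Je_JHR heU; rewrite inE => /andP [].
  rewrite prod_Je //; apply: eq_bigr => I hI.
  rewrite phiE; have hIV := subsetP se _ hI.
  rewrite ifT; last by rewrite inE; apply/orP; left; apply/imsetP; exists I.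
  by rewrite /Je imset_set1.
Qed.

Section Pre.
Variable q : {set {set 'I_n}} -> R.
Definition cc I := if q [set I] == 1 then ibar I
                   else odflt (ibar I) [pick j in I | j != ibar I].
Definition CC := [set cc I | I in V].
Definition ss i : R := (i \in CC)%:R.
Definition pre J : R := if J \in JH V E then \prod_(i in J) ss i else 0.
End Pre.

Lemma JH1 (i : 'I_n) : [set i] \in JH V E.
Proof.
have : i \in cover V by rewrite Hcov inE.
case/bigcupP => I hI hi; apply/bigcupP; exists [set I].
  by rewrite inE; apply/orP; left; apply/imsetP; exists I.
rewrite inE; apply/andP; split.
  apply/subsetP => x; rewrite inE => /eqP ->; apply/bigcupP; exists I => //.
  by rewrite inE.
apply/forall_inP => I'; rewrite inE => /eqP ->.
by rewrite (setIidPl _) ?cards1 // sub1set.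
Qed.

Lemma pre_ok {q : {set {set 'I_n}} -> R} : inMS V E q -> inSH V E (pre q) /\ phi V SR (proj SR (pre q)) = q.
Proof.
case=> q0 q01 qm.
have cI I : I \in V -> cc q I \in I.
  move=> hI; rewrite /cc; case: ifP => _; first exact: Hib.
  case: pickP => [j /andP [hj _] | _] /=; [done | exact: Hib].
have sC I i : I \in V -> i \in I -> (i \in CC q) = (i == cc q I).
  move=> hI hi; apply/imsetP/eqP => [[I' hI' ei]|->]; last by exists I.
  by rewrite ei in hi *; rewrite (blk_eq hI' hI (cI _ hI') hi).
have sib I : I \in V -> ss q (ibar I) = q [set I].
  move=> hI; rewrite /ss (sC I) ?Hib // /cc.
  have : [set I] \in LV V :|: E by rewrite inE; apply/orP; left; apply/imsetP; exists I.
  move/q01; case: ifP => [/eqP -> _| hq1 hq]; first by rewrite eqxx.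
  case: hq => hq; last by rewrite hq eqxx in hq1.
  rewrite hq; case: pickP => [j /andP [_ hj] | hn] /=.
    by rewrite eq_sym (negbTE hj).
  exfalso; have : I \subset [set ibar I].
    apply/subsetP => j hj; rewrite inE; have := hn j; rewrite hj /=.
    by move/negbFE.
  move/subset_leq_card; rewrite cards1 => h.
  by have := leq_trans (H2 hI) h.
have s01 i : ss q i = 0 \/ ss q i = 1 by rewrite /ss; case: (i \in CC q); [right|left].
have p1 i : pre q [set i] = ss q i by rewrite /pre JH1 big_set1.
split.
  split.
  - by move=> J hJ; rewrite /pre (negbTE hJ).
  - move=> J hJ; rewrite /pre hJ.
    apply: (big_ind (fun x => x = 0 \/ x = 1)); [by right| |by move=> i _; exact: s01].
    by move=> x y [->|->] [->|->]; rewrite ?(mul0r, mulr0, mulr1); [left|left|left|right].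
  - move=> I hI; under eq_bigr => i _ do rewrite p1.
    rewrite (bigD1 (cc q I)) ?cI //= /ss (sC I) ?cI // eqxx.
    rewrite big1 ?addr0 // => i /andP [hi ne].
    by rewrite (sC I) // (negbTE ne).
  - move=> J hJ _; rewrite {1}/pre hJ; apply: eq_bigr => i _; by rewrite p1.
apply: functional_extensionality => e.
rewrite phiE; case: ifP => he; last by rewrite q0 ?he.
rewrite /pre.
have -> : Je e \in JH V E by move: (Je_JHR he); rewrite inE => /andP [].
rewrite prod_Je ?LVE_sub //.
rewrite (eq_bigr (fun I => q [set I])); last first.
  by move=> I hI; apply: sib; exact: subsetP (LVE_sub he) _ hI.
case/setUP: he => [/imsetP [I hI ->]|he]; first by rewrite big_set1.
by rewrite qm.
Qed.

Lemma main :
  [/\ {in JHR V E ibar &, injective (EJ V)},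
      [set EJ V J | J in JHR V E ibar] = LV V :|: E,
      (forall w, MC R V E w -> MP R V E (phi V (JHR V E ibar) (proj (JHR V E ibar) w))),
      (forall w1 w2, MC R V E w1 -> MC R V E w2 ->
         phi V (JHR V E ibar) (proj (JHR V E ibar) w1)
         = phi V (JHR V E ibar) (proj (JHR V E ibar) w2) ->
         proj (JHR V E ibar) w1 = proj (JHR V E ibar) w2)
    & (forall z, MP R V E z ->
         exists w, MC R V E w /\ phi V (JHR V E ibar) (proj (JHR V E ibar) w) = z)].
Proof.
split.
- move=> J1 J2 h1 h2; case: (JHR_Je h1) => e1 he1 ->; case: (JHR_Je h2) => e2 he2 ->.
  by rewrite !EJ_Je ?LVE_sub // => ->.
- apply/setP => e; apply/imsetP/idP => [[J hJ ->]|he]; first exact: EJ_JHR.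
  by exists (Je e); [exact: Je_JHR | rewrite EJ_Je ?LVE_sub].
- move=> w [m [p [l [hp hl hs hw]]]].
  exists m, (fun k => phi V SR (proj SR (p k))), l; split => //.
    move=> k; exact: inMS_phi.
  move=> t; exact: phi_lin hw t.
- move=> w1 w2 _ _ heq; apply: functional_extensionality => J.
  rewrite /proj; case: ifP => hJ //.
  case: (JHR_Je hJ) => e he ->.
  by have := congr1 (fun f => f e) heq => /=; rewrite !phiE he.
- move=> z [m [q [l [hq hl hs hz]]]].
  exists (fun t => \sum_k l k * pre (q k) t); split.
    exists m, (fun k => pre (q k)), l; split => //.
    move=> k; exact: (proj1 (pre_ok (hq k))).
  apply: functional_extensionality => e.
  rewrite (@phi_lin m (fun k => pre (q k)) l) // hz.
  apply: eq_bigr => k _; by rewrite (proj2 (pre_ok (hq k))).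
Qed.
End P.

Theorem proposition2p1 (R : realFieldType) (n : nat)
  (V : {set {set 'I_n}}) (E : {set {set {set 'I_n}}})
  (ibar : {set 'I_n} -> 'I_n) :
  (0 < n)%N ->
  partition V [set: 'I_n] ->
  (forall I, I \in V -> (2 <= #|I|)%N) ->
  (forall e, e \in E -> e \subset V /\ (2 <= #|e|)%N) ->
  (forall I, I \in V -> ibar I \in I) ->
  [/\ {in JHR V E ibar &, injective (EJ V)},
      [set EJ V J | J in JHR V E ibar] = LV V :|: E,
      (forall w, MC R V E w -> MP R V E (phi V (JHR V E ibar) (proj (JHR V E ibar) w))),
      (forall w1 w2, MC R V E w1 -> MC R V E w2 ->
         phi V (JHR V E ibar) (proj (JHR V E ibar) w1)
         = phi V (JHR V E ibar) (proj (JHR V E ibar) w2) ->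
         proj (JHR V E ibar) w1 = proj (JHR V E ibar) w2)
    & (forall z, MP R V E z ->
         exists w, MC R V E w /\ phi V (JHR V E ibar) (proj (JHR V E ibar) w) = z)].
Proof.
move=> _ /and3P [/eqP Hcov Htriv _] H2 HE Hib.
apply: main => //; by move=> e /HE [].
Qed.
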